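(* Let $f(1),\dots,f(T)\in\mathbb R$ and $0=\nu_0<\nu_1<\dots<\nu_M=T$ be such that $f(\nu_m+1)=\dots=f(\nu_{m+1})$ for all $m=0,\dots,M-1$. Let $\Delta$ be a positive integer and suppose that for some $1\le m\le M-1$, $|\nu_m-\nu_{m'}|\ge\Delta$ for all $m'\ne m$. Then, writing $\nu=\nu_m$, \[ \max\Bigl\{\Bigl|\sum_{r=1}^{\nu-\Delta}f(r)\Bigr|,\ \Bigl|\sum_{r=1}^{\nu}f(r)\Bigr|,\ \Bigl|\sum_{r=1}^{\nu+\Delta}f(r)\Bigr|\Bigr\}\ \ge\ \Delta\,|f(\nu)-f(\nu+1)|/4. \]
   Context: An empty sum equals $0$. *)

(* Defs.v *)
From HB Require Import structures.
From mathcomp Require Import all_boot all_order all_algebra.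
Set Implicit Arguments. Unset Strict Implicit. Unset Printing Implicit Defensive.

(* Main.v *)
Require Import Defs.
From HB Require Import structures.
From mathcomp Require Import all_boot all_order all_algebra.
From mathcomp Require Import zify ring lra.
Import Order.TTheory GRing.Theory Num.Theory.
Local Open Scope ring_scope.

Lemma final_ineq (R : realFieldType) (x y z d : R) :
  Num.max `|x| (Num.max `|y| `|z|) >= `|2 * y - x - z| / 4%:R.
Proof.
set Mx := Num.max _ _.
have hx : `|x| <= Mx by rewrite /Mx le_max lexx.
have hy : `|y| <= Mx by rewrite /Mx !le_max lexx orbT.
have hz : `|z| <= Mx by rewrite /Mx !le_max lexx !orbT.
move: hx hy hz; rewrite !ler_norml => /andP[hx1 hx2] /andP[hy1 hy2] /andP[hz1 hz2].
rewrite ler_pdivrMr ?ltr0n // ler_norml; apply/andP; split; lra.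
Qed.

Theorem lemma21 (R : realFieldType) (T M : nat) (f : nat -> R) (nu : nat -> nat)
  (Delta m : nat)
  (hnu0 : nu 0%N = 0%N)
  (hnuM : nu M = T)
  (hinc : forall k : nat, (k < M)%N -> (nu k < nu k.+1)%N)
  (hconst : forall k r : nat, (k < M)%N -> (nu k < r <= nu k.+1)%N ->
            f r = f (nu k).+1)
  (hDelta : (0 < Delta)%N)
  (hm : (1 <= m <= M.-1)%N)
  (hsep : forall m' : nat, (m' <= M)%N -> m' <> m ->
          (Delta <= `|(nu m)%:Z - (nu m')%:Z|)%N) :
  Num.max `|\sum_(1 <= r < (nu m - Delta).+1) f r|
    (Num.max `|\sum_(1 <= r < (nu m).+1) f r|
             `|\sum_(1 <= r < (nu m + Delta).+1) f r|)
  >= Delta%:R * `|f (nu m) - f (nu m).+1| / 4%:R.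
Proof.
have hmM : (m < M)%N by lia.
have i1 := hinc m.-1 ltac:(lia).
have i2 := hinc m hmM.
have e1 : m.-1.+1 = m by lia.
rewrite e1 in i1.
have s1 := hsep m.-1 ltac:(lia) ltac:(lia).
have s2 := hsep m.+1 ltac:(lia) ltac:(lia).
have d1 : (Delta <= nu m - nu m.-1)%N by lia.
have d2 : (Delta <= nu m.+1 - nu m)%N by lia.
set a := f (nu m). set b := f (nu m).+1.
have ha : forall r, (nu m - Delta < r <= nu m)%N -> f r = a.
  move=> r hr; rewrite /a.
  have := hconst m.-1 r ltac:(lia); rewrite e1 => ->; last by lia.
  have := hconst m.-1 (nu m) ltac:(lia); rewrite e1 => ->; last by lia.
  by [].
have hb : forall r, (nu m < r <= nu m + Delta)%N -> f r = b.
  by move=> r hr; rewrite /b (hconst m r hmM) //; lia.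
set S1 := \sum_(1 <= r < (nu m - Delta).+1) f r.
have eS2 : \sum_(1 <= r < (nu m).+1) f r = S1 + Delta%:R * a.
  rewrite (@big_cat_nat _ _ _ (nu m - Delta).+1) //=; try lia.
  congr (_ + _).
  rewrite (eq_big_nat _ _ (F2 := fun _ => a)); last first.
    by move=> i hi; apply: ha; lia.
  by rewrite sumr_const_nat mulr_natl; congr (_ *+ _); lia.
have eS3 : \sum_(1 <= r < (nu m + Delta).+1) f r =
    \sum_(1 <= r < (nu m).+1) f r + Delta%:R * b.
  rewrite (@big_cat_nat _ _ _ (nu m).+1) //=; try lia.
  congr (_ + _).
  rewrite (eq_big_nat _ _ (F2 := fun _ => b)); last first.
    by move=> i hi; apply: hb; lia.
  by rewrite sumr_const_nat mulr_natl; congr (_ *+ _); lia.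
rewrite eS3 eS2.
have -> : Delta%:R * `|a - b| =
   `|2 * (S1 + Delta%:R * a) - S1 - (S1 + Delta%:R * a + Delta%:R * b)|.
  rewrite -[X in X * _]normr_nat -normrM; congr `|_|; ring.
exact: final_ineq.
Qed.
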